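(* Let $\mathbf{k}$ be an algebraically closed field of prime characteristic $p$ and let $R(p)$ be the Radford algebra over $\mathbf{k}$. Then the spaces of left and right integrals in $R(p)$ are \[ \int^l_{R(p)}=\mathbf{k}\Big(\sum_{0\le i\le p-1}g^i\Big)\Big(\sum_{1\le i\le p-1}(-1)^ix^i\Big),\qquad \int^r_{R(p)}=\mathbf{k}\Big(\sum_{1\le i\le p-1}x^i\Big)\Big(\sum_{0\le i\le p-1}g^i\Big), \] and the spaces of left and right integrals in the dual Hopf algebra $R(p)^*$ are \[ \int^l_{R(p)^*}=\mathbf{k}\,\delta_{gx^{p-1}},\qquad \int^r_{R(p)^*}=\mathbf{k}\,\delta_{x^{p-1}}. \]
   Context: The Radford algebra $R(p)$ is the Hopf algebra over $\mathbf{k}$ generated as an algebra by $g,x$ subject to the relations $g^p=1$, $x^p=x$, $gx-xg=g^2-g$ if $p>2$, and $g^2=1$, $x^2=x$, $gx-xg=1-g$ if $p=2$; its coalgebra structure is given by $\Delta(g)=g\otimes g$, $\Delta(x)=x\otimes 1+g\otimes x$, $\varepsilon(g)=1$, $\varepsilon(x)=0$. It has basis $\{g^ix^j: 0\le i,j\le p-1\}$, and $\{\delta_{g^ix^j}: 0\le i,j\le p-1\}$ denotes the dual basis of $R(p)^*$, i.e. $\delta_{g^ix^j}(g^mx^n)=1$ if $(m,n)=(i,j)$ and $0$ otherwise. The dual Hopf algebra $H^*$ of a finite-dimensional Hopf algebra $H$ has product $(fg)(h)=\sum f(h_{(1)})g(h_{(2)})$ and counit $f\mapsto f(1)$. A left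 (resp. right) integral in a Hopf algebra $H$ is an element $\Lambda\in H$ with $h\Lambda=\varepsilon(h)\Lambda$ (resp. $\Lambda h=\varepsilon(h)\Lambda$) for all $h\in H$; $\int^l_H$ and $\int^r_H$ denote the spaces of left and right integrals. *)

(* Defs.v *)
From HB Require Import structures.
From mathcomp Require Import all_boot all_order all_algebra.
Set Implicit Arguments. Unset Strict Implicit. Unset Printing Implicit Defensive.
Import Order.TTheory GRing.Theory.
Local Open Scope ring_scope.

Section Radford.
Variables (k : fieldType) (A : algType k).

(* Defining relations of the Radford algebra R(p).  For p = 2 the paper's
   relations g^2=1, x^2=x, gx-xg=1-g coincide with these (g^2 - g = 1 - g). *)
Definition radford_rels (p : nat) (g x : A) : Prop :=
  [/\ g ^+ p = 1, x ^+ p = x & g * x - x * g = g ^+ 2 - g].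

Definition radford_basis (p : nat) (g x : A) : Prop :=
  (forall a : A, exists c : 'I_p -> 'I_p -> k,
      a = \sum_(i < p) \sum_(j < p) c i j *: (g ^+ i * x ^+ j)) /\
  (forall c : 'I_p -> 'I_p -> k,
      \sum_(i < p) \sum_(j < p) c i j *: (g ^+ i * x ^+ j) = 0 ->
      forall i j, c i j = 0).

Definition klinear (f : A -> k) : Prop :=
  forall (c : k) (a b : A), f (c *: a + b) = c * f a + f b.

Definition is_counit (g x : A) (eps : A -> k) : Prop :=
  [/\ klinear eps, (forall a b, eps (a * b) = eps a * eps b), eps 1 = 1,
      eps g = 1 & eps x = 0].

Definition left_integral (eps : A -> k) (L : A) : Prop :=
  forall h : A, h * L = eps h *: L.
Definition right_integral (eps : A -> k) (L : A) : Prop :=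
  forall h : A, L * h = eps h *: L.

(* Coproduct on basis elements, as a formal sum of pure tensors:
   Delta(g^m x^n) = (g (x) g)^m (x (x) 1 + g (x) x)^n
                  = sum_{w in {0,1}^n} g^m a_w (x) g^m b_w,
   where a_w (resp. b_w) is the ordered product of the first (resp. second)
   tensor factors of the chosen summands (true = g (x) x, false = x (x) 1). *)
Definition Dleft (g x : A) (w : seq bool) : A :=
  \prod_(b <- w) (if b then g else x).
Definition Dright (x : A) (w : seq bool) : A :=
  \prod_(b <- w) (if b then x else 1).

(* (f * phi)(g^m x^n) = sum f(h_(1)) phi(h_(2)) : convolution product of A^*,
   evaluated on the basis element g^m x^n. *)
Definition conv_on_basis (g x : A) (f phi : A -> k) (m n : nat) : k :=
  \sum_(w : n.-tuple bool)
     f (g ^+ m * Dleft g x w) * phi (g ^+ m * Dright x w).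

(* lam in A^* is a left (resp. right) integral of A^*: f lam = f(1) lam
   (resp. lam f = f(1) lam) for all f in A^*; two linear functionals are equal
   iff they agree on the basis {g^m x^n}. *)
Definition dual_left_integral (p : nat) (g x : A) (lam : A -> k) : Prop :=
  forall f : A -> k, klinear f ->
    forall m n : 'I_p, conv_on_basis g x f lam m n = f 1 * lam (g ^+ m * x ^+ n).
Definition dual_right_integral (p : nat) (g x : A) (lam : A -> k) : Prop :=
  forall f : A -> k, klinear f ->
    forall m n : 'I_p, conv_on_basis g x lam f m n = f 1 * lam (g ^+ m * x ^+ n).

End Radford.

(* Main.v *)
Require Import Defs.
From HB Require Import structures.
From mathcomp Require Import all_boot all_order all_algebra.
From Stdlib Require Import ClassicalEpsilon.
Set Implicit Arguments. Unset Strict Implicit. Unset Printing Implicit Defensive.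
Import Order.TTheory GRing.Theory.
Local Open Scope ring_scope.

Section KL.
Variables (k : fieldType) (A : algType k) (f : A -> k).
Hypothesis fl : klinear f.

Lemma kl0 : f 0 = 0.
Proof. have := fl 1 0 0; rewrite scale1r addr0 mul1r => h; by apply: (addrI (f 0)); rewrite addr0 -h. Qed.
Lemma klD a b : f (a + b) = f a + f b.
Proof. by rewrite -[a]scale1r fl mul1r scale1r. Qed.
Lemma klZ c a : f (c *: a) = c * f a.
Proof. by rewrite -[c *: a]addr0 fl kl0 addr0. Qed.
Lemma klN a : f (- a) = - f a.
Proof. by rewrite -scaleN1r klZ mulN1r. Qed.
Lemma klB a b : f (a - b) = f a - f b.
Proof. by rewrite klD klN. Qed.
Lemma klMn a n : f (a *+ n) = f a *+ n.
Proof. by elim: n => [|n IH]; rewrite ?mulr0n ?kl0 // !mulrS klD IH. Qed.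
Lemma kl_sum (I : Type) (r : seq I) (P : pred I) (F : I -> A) :
  f (\sum_(i <- r | P i) F i) = \sum_(i <- r | P i) f (F i).
Proof.
elim: r => [|i r IH]; first by rewrite !big_nil kl0.
by rewrite !big_cons; case: (P i); rewrite ?klD IH.
Qed.
End KL.

Lemma tuple_sum (R : nmodType) n (F : n.+1.-tuple bool -> R) :
  \sum_(w : n.+1.-tuple bool) F w =
  \sum_(w : n.-tuple bool) (F (cons_tuple true w) + F (cons_tuple false w)).
Proof.
rewrite (reindex (fun bw : bool * n.-tuple bool => cons_tuple bw.1 bw.2)) /=.
  rewrite -(pair_big xpredT xpredT (fun b w => F (cons_tuple b w))) /=.
  by rewrite big_bool big_split.
exists (fun t => (thead t, [tuple of behead t])) => [[b w] _|t _] /=.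
  by congr (_, _); apply: val_inj.
by case/tupleP: t => b w; apply: val_inj.
Qed.

Lemma count_tuples n t :
  (\sum_(w : n.-tuple bool) (count id w == t))%N = 'C(n, t).
Proof.
elim: n t => [|n IH] t.
  rewrite (eq_bigr (fun _ => (0 == t) : nat)) => [|w _]; last by rewrite (tuple0 w).
  by rewrite sum_nat_const card_tuple; case: t.
rewrite (tuple_sum (fun w : n.+1.-tuple bool => (count id w == t) : nat)) /=.
rewrite big_split /= IH; case: t => [|t].
  rewrite bin0 big1 // => w _; by [].
rewrite binS addnC; congr (_ + _); rewrite -IH; apply: eq_bigr => w _ //.
Qed.

Lemma sum_delta (V : nmodType) n (F : nat -> V) i0 : (i0 < n)%N ->
  \sum_(i < n) (if (i == i0 :> nat) then F i else 0) = F i0.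
Proof.
move=> h; rewrite (bigD1 (Ordinal h)) //= eqxx big1 ?addr0 // => i.
by rewrite -val_eqE /= => /negbTE ->.
Qed.

Section Rad.
Variables (k : fieldType) (p : nat) (A : algType k) (g x : A).
Hypotheses (pp : prime p) (chp : p \in [pchar k]) (rels : radford_rels p g x)
  (bas : radford_basis p g x).

Lemma p_gt0 : (0 < p)%N. Proof. exact: prime_gt0. Qed.
Lemma p_gt1 : (1 < p)%N. Proof. exact: prime_gt1. Qed.
Lemma gp : g ^+ p = 1. Proof. by case: rels. Qed.
Lemma xp : x ^+ p = x. Proof. by case: rels. Qed.
Lemma gxc : g * x - x * g = g ^+ 2 - g. Proof. by case: rels. Qed.
Lemma pA0 (a : A) : a *+ p = 0.
Proof. by rewrite -scaler_nat (pcharf0 chp) scale0r. Qed.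
Lemma gmod i : g ^+ (i %% p) = g ^+ i. Proof. exact: expr_mod gp. Qed.

Lemma xg : x * g = g * x + (g - g ^+ 2).
Proof. by rewrite -[g - g ^+ 2]opprB -gxc opprB addrC subrK. Qed.

Lemma xgi i : x * g ^+ i = g ^+ i * x + (g ^+ i - g ^+ i.+1) *+ i.
Proof.
elim: i => [|i IH]; first by rewrite expr0 mulr1 mul1r mulr0n addr0.
rewrite exprSr mulrA IH mulrDl -mulrA xg mulrDr mulrA -exprSr mulrnAl.
rewrite mulrBl -!exprSr mulrBr -exprSr -exprD addn2 mulrS.
by rewrite !addrA.
Qed.

Inductive SpX (d : nat) : A -> Prop :=
| SpX0 : SpX d 0
| SpXD a b : SpX d a -> SpX d b -> SpX d (a + b)
| SpXZ (c : k) a : SpX d a -> SpX d (c *: a)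
| SpXG i j : (j < d)%N -> SpX d (g ^+ i * x ^+ j).

Lemma SpXN d a : SpX d a -> SpX d (- a).
Proof. by move=> h; rewrite -scaleN1r; apply: SpXZ. Qed.
Lemma SpXB d a b : SpX d a -> SpX d b -> SpX d (a - b).
Proof. by move=> ha hb; apply: SpXD => //; apply: SpXN. Qed.
Lemma SpXMn d a n : SpX d a -> SpX d (a *+ n).
Proof. by move=> h; rewrite -scaler_nat; apply: SpXZ. Qed.
Lemma SpX_mono d e a : (d <= e)%N -> SpX d a -> SpX e a.
Proof.
move=> de; elim=> [|a1 b1 _ h1 _ h2|c a1 _ h|i j hj]; try by constructor.
by apply: SpXG; exact: leq_trans hj de.
Qed.
Lemma SpX_g d a : SpX d a -> SpX d (g * a).
Proof.
elim=> [|a1 b1 _ h1 _ h2|c a1 _ h|i j hj].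
- by rewrite mulr0; constructor.
- by rewrite mulrDr; constructor.
- by rewrite -scalerAr; constructor.
- by rewrite mulrA -exprS; constructor.
Qed.
Lemma SpX_gm m d a : SpX d a -> SpX d (g ^+ m * a).
Proof.
elim: m => [|m IH] h; first by rewrite expr0 mul1r.
by rewrite exprS -mulrA; apply: SpX_g; apply: IH.
Qed.

Lemma x_gx i j : x * (g ^+ i * x ^+ j) =
  g ^+ i * x ^+ j.+1 + (g ^+ i * x ^+ j - g ^+ i.+1 * x ^+ j) *+ i.
Proof.
by rewrite mulrA xgi mulrDl -mulrA -exprS mulrnAl mulrBl.
Qed.

Lemma SpX_x d a : SpX d a -> SpX d.+1 (x * a).
Proof.
elim=> [|a1 b1 _ h1 _ h2|c a1 _ h|i j hj].
- by rewrite mulr0; constructor.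
- by rewrite mulrDr; constructor.
- by rewrite -scalerAr; constructor.
- rewrite x_gx; apply: SpXD; first by apply: SpXG.
  by apply: SpXMn; apply: SpXB; apply: SpXG; apply: leqW.
Qed.

Lemma SpX_kill (f : A -> k) d a : klinear f ->
  (forall i j, (j < d)%N -> f (g ^+ i * x ^+ j) = 0) -> SpX d a -> f a = 0.
Proof.
move=> fl h; elim=> [|a1 b1 _ h1 _ h2|c a1 _ h3|i j hj].
- exact: kl0.
- by rewrite klD // h1 h2 addr0.
- by rewrite klZ // h3 mulr0.
- exact: h.
Qed.

Lemma Dleft_cons b w : Dleft g x (b :: w) = (if b then g else x) * Dleft g x w.
Proof. by rewrite /Dleft big_cons. Qed.

Lemma Dleft_spec w :
  SpX (count negb w) (Dleft g x w - g ^+ (count id w) * x ^+ (count negb w)).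
Proof.
elim: w => [|b w IH].
  by rewrite /Dleft big_nil /= expr0 mul1r subrr; constructor.
rewrite Dleft_cons; case: b => /=.
  by rewrite add0n exprS -mulrA -mulrBr; apply: SpX_g.
rewrite add0n add1n.
have -> : x * Dleft g x w - g ^+ count id w * x ^+ (count negb w).+1 =
   x * (Dleft g x w - g ^+ count id w * x ^+ count negb w) +
   (x * (g ^+ count id w * x ^+ count negb w)
      - g ^+ count id w * x ^+ (count negb w).+1).
  by rewrite mulrBr addrA subrK.
apply: SpXD; first exact: SpX_x.
rewrite x_gx addrC addKr; apply: SpXMn; apply: SpXB; apply: SpXG => //.
Qed.

Lemma Dleft_allfalse w : count id w = 0%N -> Dleft g x w = x ^+ size w.
Proof.
elim: w => [|b w IH]; first by rewrite /Dleft big_nil.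
by case: b => //= h; rewrite Dleft_cons IH // exprS.
Qed.

Lemma Dleft_alltrue w : count negb w = 0%N -> Dleft g x w = g ^+ size w.
Proof.
elim: w => [|b w IH]; first by rewrite /Dleft big_nil.
by case: b => //= h; rewrite Dleft_cons IH // exprS.
Qed.

Lemma Dright_count w : Dright x w = x ^+ count id w.
Proof.
elim: w => [|b w IH]; first by rewrite /Dright big_nil.
by rewrite /Dright big_cons -/(Dright x w) IH; case: b => //=; rewrite ?exprS ?mul1r.
Qed.

Lemma count_negb (w : seq bool) : count negb w = (size w - count id w)%N.
Proof. by rewrite -(count_predC id w) addKn. Qed.

Definition coefs (a : A) : 'I_p -> 'I_p -> k :=
  proj1_sig (constructive_indefinite_description _ (bas.1 a)).

Lemma coefs_rec a :
  a = \sum_(i < p) \sum_(j < p) coefs a i j *: (g ^+ i * x ^+ j).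
Proof. exact: (proj2_sig (constructive_indefinite_description _ (bas.1 a))). Qed.

Lemma coefs_uniq (c : 'I_p -> 'I_p -> k) a :
  a = \sum_(i < p) \sum_(j < p) c i j *: (g ^+ i * x ^+ j) ->
  forall i j, coefs a i j = c i j.
Proof.
move=> ha i j; apply/eqP; rewrite -subr_eq0; apply/eqP.
apply: (bas.2 (fun i j => coefs a i j - c i j)).
apply: (@etrans _ _ ((\sum_(i < p) \sum_(j < p) coefs a i j *: (g ^+ i * x ^+ j)) -
   (\sum_(i < p) \sum_(j < p) c i j *: (g ^+ i * x ^+ j)))); last by rewrite -coefs_rec -ha subrr.
rewrite -sumrB; apply: eq_bigr => i' _.
by rewrite -sumrB; apply: eq_bigr => j' _; rewrite scalerBl.
Qed.

Definition o0 : 'I_p := Ordinal p_gt0.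
Definition kap (i j : nat) (a : A) : k := coefs a (insubd o0 i) (insubd o0 j).

Lemma kap_rec a :
  a = \sum_(i < p) \sum_(j < p) kap i j a *: (g ^+ i * x ^+ j).
Proof. by rewrite {1}(coefs_rec a) /kap; apply: eq_bigr => i _; apply: eq_bigr => j _; rewrite !valKd. Qed.

Lemma kap_lin i j : klinear (kap i j).
Proof.
move=> c a b; rewrite /kap.
have H : c *: a + b = \sum_(i < p) \sum_(j < p)
   (c * coefs a i j + coefs b i j) *: (g ^+ i * x ^+ j).
  rewrite [X in c *: X + _](coefs_rec a) [X in _ + X](coefs_rec b) scaler_sumr -big_split.
  apply: eq_bigr => i' _; rewrite scaler_sumr -big_split; apply: eq_bigr => j' _.
  by rewrite scalerA scalerDl.
by rewrite (coefs_uniq H).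
Qed.

Lemma kap_uniq (c : nat -> nat -> k) a :
  a = \sum_(i < p) \sum_(j < p) c i j *: (g ^+ i * x ^+ j) ->
  forall i j, (i < p)%N -> (j < p)%N -> kap i j a = c i j.
Proof.
move=> ha i j hi hj; rewrite /kap (coefs_uniq (c := fun i j => c i j) ha).
by rewrite /= !val_insubd hi hj.
Qed.

Lemma kap_ext u v :
  (forall i j, (i < p)%N -> (j < p)%N -> kap i j u = kap i j v) -> u = v.
Proof.
move=> h; rewrite (kap_rec u) (kap_rec v); apply: eq_bigr => i _.
by apply: eq_bigr => j _; rewrite h.
Qed.

Lemma kap_gx a b i j : (b < p)%N -> (i < p)%N -> (j < p)%N ->
  kap i j (g ^+ a * x ^+ b) = (((a %% p)%N == i) && (b == j))%:R.
Proof.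
move=> hb hi hj; rewrite -gmod.
apply: (kap_uniq (c := fun i j => (((a %% p)%N == i) && (b == j))%:R)) => //.
rewrite -(sum_delta (fun i => g ^+ i * x ^+ b) (ltn_pmod a p_gt0)).
apply: eq_bigr => i' _; rewrite (eq_sym (val i')).
rewrite -(sum_delta (fun j => g ^+ i' * x ^+ j) hb).
case: eqP => [<-|_] /=.
  by apply: eq_bigr => j' _; rewrite eq_sym; case: eqP => _; rewrite ?scale1r ?scale0r.
by rewrite big1 // => j' _; rewrite scale0r.
Qed.

Lemma kap_gx_ext a m i j : (m <= p)%N -> (i < p)%N -> (j < p)%N ->
  kap i j (g ^+ a * x ^+ m) =
  (((a %% p)%N == i) && ((m == j) || ((m == p) && (j == 1%N))))%:R.
Proof.
move=> hm hi hj; case: (ltnP m p) => hmp.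
  by rewrite kap_gx // (ltn_eqF hmp) andFb orbF.
have -> : m = p by apply/eqP; rewrite eqn_leq hm hmp.
rewrite xp -[x]expr1 kap_gx ?p_gt1 // eqxx andTb.
by rewrite (gtn_eqF hj) (eq_sym 1%N).
Qed.

Lemma kap_SpX d a i j : (d <= j)%N -> (i < p)%N -> (j < p)%N ->
  SpX d a -> kap i j a = 0.
Proof.
move=> dj hi hj; apply: SpX_kill; first exact: kap_lin.
move=> i' j' hj'; rewrite kap_gx //; last by apply: (leq_trans hj'); apply: (leq_trans dj); apply: ltnW.
by rewrite (ltn_eqF (leq_trans hj' dj)) andbF.
Qed.

Definition S := \sum_(i < p) g ^+ i.

Lemma sum_gS : \sum_(i < p) g ^+ i.+1 = S.
Proof.
rewrite /S; have := gp; rewrite -(prednK p_gt0) => h.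
by rewrite big_ord_recr /= h big_ord_recl /= expr0 addrC.
Qed.

Lemma gS : g * S = S.
Proof. by rewrite -{2}sum_gS /S mulr_sumr; apply: eq_bigr => i _; rewrite -exprS. Qed.
Lemma Sg : S * g = S.
Proof. by rewrite -{2}sum_gS /S mulr_suml; apply: eq_bigr => i _; rewrite -exprSr. Qed.
Lemma gmS m : g ^+ m * S = S.
Proof. by elim: m => [|m IH]; rewrite ?expr0 ?mul1r // exprS -mulrA IH gS. Qed.
Lemma SgM m : S * g ^+ m = S.
Proof. by elim: m => [|m IH]; rewrite ?expr0 ?mulr1 // exprSr mulrA IH Sg. Qed.

Lemma tele n : \sum_(i < n) (g ^+ i - g ^+ i.+1) *+ i + g ^+ n *+ n =
  \sum_(i < n) g ^+ i.+1.
Proof.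
elim: n => [|n IH]; first by rewrite !big_ord0 mulr0n addr0.
rewrite !big_ord_recr /= -IH mulrnBl mulrSr addrA; congr (_ + _).
by rewrite -addrA subrK.
Qed.

Lemma sumT : \sum_(i < p) (g ^+ i - g ^+ i.+1) *+ i = S.
Proof. by rewrite -sum_gS -tele pA0 addr0. Qed.

Lemma xS : x * S = S * x + S.
Proof.
rewrite {1}/S mulr_sumr; under eq_bigr => i _ do rewrite xgi.
rewrite big_split /= sumT.
by rewrite /S mulr_suml.
Qed.

Lemma Sx : S * x = x * S - S.
Proof. by rewrite xS addrK. Qed.

Definition U := \sum_(1 <= i < p) (-1) ^+ i *: x ^+ i.

Lemma xU_aux n : (x + 1) * \sum_(1 <= i < n.+1) (-1) ^+ i *: x ^+ i =
  (-1) ^+ n *: x ^+ n.+1 - x.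
Proof.
elim: n => [|n IH]; first by rewrite big_geq // mulr0 expr0 scale1r expr1 subrr.
rewrite big_nat_recr //= mulrDr IH mulrDl mul1r -scalerAr -exprS.
have -> : (-1) ^+ n.+1 *: x ^+ n.+1 = - ((-1) ^+ n *: x ^+ n.+1).
  by rewrite exprS mulN1r scaleNr.
by rewrite addrC -addrA addKr.
Qed.

Lemma m1p : (-1) ^+ p.-1 = 1 :> k.
Proof.
case: (even_prime pp) => [p2|op]; last first.
  have h : odd p.-1 = false.
    by move: op; rewrite -{1}(prednK p_gt0) /= => /negPf.
  by rewrite -signr_odd h.
rewrite p2 /= expr1; apply/eqP; rewrite -subr_eq0 -opprD oppr_eq0 -mulr2n.
by rewrite -p2 (pcharf0 chp).
Qed.

Lemma xU : (x + 1) * U = 0.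
Proof.
rewrite /U -(prednK p_gt0) xU_aux prednK ?p_gt0 // m1p scale1r xp subrr //.
Qed.

Definition Lam := S * U.
Definition T := \sum_(1 <= i < p) x ^+ i.
Definition Lam' := T * S.

Lemma xLam : x * Lam = 0.
Proof.
rewrite /Lam mulrA xS.
have -> : S * x + S = S * (x + 1) by rewrite mulrDr mulr1.
by rewrite -mulrA xU mulr0.
Qed.
Lemma gLam : g * Lam = Lam.
Proof. by rewrite /Lam mulrA gS. Qed.

Lemma Lam'g : Lam' * g = Lam'.
Proof. by rewrite /Lam' -mulrA Sg. Qed.

Lemma Tx_aux n : \sum_(1 <= i < n.+1) x ^+ i * (x - 1) = x ^+ n.+1 - x.
Proof.
elim: n => [|n IH]; first by rewrite big_geq // expr1 subrr.
rewrite big_nat_recr //= IH mulrBr mulr1 -exprSr.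
by rewrite addrC addrA addrC subrK addrC.
Qed.

Lemma Lam'x : Lam' * x = 0.
Proof.
rewrite /Lam' -mulrA Sx.
have -> : x * S - S = (x - 1) * S by rewrite mulrBl mul1r.
rewrite mulrA /T mulr_suml.
by rewrite -(prednK p_gt0) Tx_aux prednK ?p_gt0 // xp subrr mul0r.
Qed.

Lemma sum_delta2 (F : nat -> nat -> k) i j : (i < p)%N -> (j < p)%N ->
  \sum_(a < p) \sum_(b < p) F a b * ((a == i :> nat) && (b == j :> nat))%:R = F i j.
Proof.
move=> hi hj; rewrite -(sum_delta (fun a => F a j) hi); apply: eq_bigr => a _.
case: eqP => [->|_].
  rewrite -(sum_delta (F i) hj); apply: eq_bigr => b _.
  by rewrite andTb mulr_natr mulrb.
by rewrite big1 // => b _; rewrite andFb mulr0.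
Qed.

Lemma sum_delta1 (F : nat -> k) j : (j < p)%N ->
  \sum_(b < p) F b * (b == j :> nat)%:R = F j.
Proof.
move=> hj; rewrite -(sum_delta F hj); apply: eq_bigr => b _.
by rewrite mulr_natr mulrb.
Qed.

Lemma modS_eq a i : (a < p)%N -> (i.+1 < p)%N -> ((a.+1 %% p)%N == i.+1) = (a == i).
Proof.
move=> ha hi; case: (ltnP a.+1 p) => h; first by rewrite modn_small.
have ap : a.+1 = p by apply/eqP; rewrite eqn_leq ha h.
rewrite ap modnn /=; apply/esym/negbTE; apply/eqP => ai.
by move: hi; rewrite -ai ap ltnn.
Qed.

Lemma kap_gmul z i j : (i.+1 < p)%N -> (j < p)%N -> kap i.+1 j (g * z) = kap i j z.
Proof.
move=> hi hj; rewrite {1}(kap_rec z) mulr_sumr (kl_sum (kap_lin _ _)).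
rewrite -(sum_delta2 (fun a b => kap a b z) (ltnW hi) hj); apply: eq_bigr => a _.
rewrite mulr_sumr (kl_sum (kap_lin _ _)); apply: eq_bigr => b _.
rewrite -scalerAr (klZ (kap_lin _ _)) mulrA -exprS kap_gx //.
by rewrite modS_eq.
Qed.

Lemma kap_Sx a b m : (m <= p)%N -> (a < p)%N -> (b < p)%N ->
  kap a b (S * x ^+ m) = ((m == b) || ((m == p) && (b == 1%N)))%:R.
Proof.
move=> hm ha hb; rewrite /S mulr_suml (kl_sum (kap_lin _ _)).
rewrite -(sum_delta (fun _ => ((m == b) || ((m == p) && (b == 1%N)))%:R) ha).
apply: eq_bigr => i _; rewrite kap_gx_ext // modn_small //.
by case: eqP.
Qed.

Lemma nat1_sum (F : nat -> k) :
  \sum_(1 <= i < p) F i = \sum_(i < p) F i - F 0%N.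
Proof. by rewrite -(big_mkord xpredT) (big_ltn p_gt0) addrC addKr. Qed.

Lemma kap_Lam a b : (a < p)%N -> (b < p)%N ->
  kap a b Lam = (-1) ^+ b - (b == 0%N)%:R.
Proof.
move=> ha hb; rewrite /Lam /U mulr_sumr (kl_sum (kap_lin _ _)).
rewrite (eq_big_nat _ _ (F2 := fun i => (-1) ^+ i * (i == b)%:R)).
  by rewrite nat1_sum (sum_delta1 (fun i => (-1) ^+ i) hb) expr0 mul1r eq_sym.
move=> i /andP [_ hi].
rewrite -scalerAr (klZ (kap_lin _ _)) kap_Sx ?(ltnW hi) //.
by rewrite (ltn_eqF hi) andFb orbF.
Qed.

Lemma LI_uniq L : g * L = L -> x * L = 0 -> exists c, L = c *: Lam.
Proof.
move=> hg hx.
have s1 i j : (i < p)%N -> (j < p)%N -> kap i j L = kap 0 j L.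
  elim: i => [//|i IH] hi hj.
  by rewrite -IH ?(ltnW hi) // -{1}hg kap_gmul.
set d := fun j => kap 0 j L.
have LSD : L = S * \sum_(j < p) d j *: x ^+ j.
  rewrite {1}(kap_rec L) /S mulr_suml; apply: eq_bigr => i _.
  rewrite mulr_sumr; apply: eq_bigr => j _.
  by rewrite s1 // scalerAr.
have eq0 b : (b < p)%N -> (b != 1%N) ->
    d b + (if b is b'.+1 then d b' else 0) = 0.
  move=> hb hb1; have := congr1 (kap 0 b) hx.
  rewrite (kl0 (kap_lin _ _)) {1}LSD mulrA xS.
  rewrite mulr_sumr (kl_sum (kap_lin _ _)).
  under eq_bigr => j _ do rewrite -scalerAr (klZ (kap_lin _ _)) mulrDl -mulrA -exprS
     (klD (kap_lin _ _)) !kap_Sx ?p_gt0 ?(ltnW (ltn_ord j)) ?(ltn_ord j) // (negbTE hb1) !andbF !orbF.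
  move=> H; rewrite -[RHS]H.
  under eq_bigr => j _ do rewrite mulrDr.
  rewrite big_split /= (sum_delta1 d hb) addrC; congr (_ + _).
  case: b hb hb1 {H} => [|b'] hb hb1.
    by rewrite big1 // => j _; rewrite mulr0.
  under eq_bigr => j _ do rewrite eqSS.
  by rewrite sum_delta1 // ltnW.
have d0 : d 0%N = 0 by have := eq0 0%N p_gt0 isT; rewrite addr0.
have dS b : (0 < b)%N -> (b.+1 < p)%N -> d b.+1 = - d b.
  move=> b0 hb; have := eq0 b.+1 hb; rewrite eqSS -lt0n b0 => /(_ isT) /eqP.
  by rewrite addr_eq0 => /eqP.
have dform b : (0 < b)%N -> (b < p)%N -> d b = - d 1%N * (-1) ^+ b.
  elim: b => [//|b IH] _ hb; case: b IH hb => [|b] IH hb.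
    by rewrite expr1 mulrN mulr1 opprK.
  rewrite dS // ?(ltnW hb) // IH // ?(ltnW hb) //.
  by rewrite !exprS !mulN1r !mulrN !opprK.
exists (- d 1%N); apply: kap_ext => a b ha hb.
rewrite (klZ (kap_lin _ _)) kap_Lam // s1 //.
case: b hb => [|b] hb; first by rewrite expr0 subrr mulr0; exact: d0.
by rewrite /= subr0; apply: dform.
Qed.

Lemma Dleft_nseq_false j w : Dleft g x (nseq j false ++ w) = x ^+ j * Dleft g x w.
Proof.
elim: j => [|j IH]; first by rewrite expr0 mul1r.
by rewrite /= Dleft_cons IH exprS mulrA.
Qed.

Lemma xjgi j i : SpX j (x ^+ j * g ^+ i - g ^+ i * x ^+ j).
Proof.
have := Dleft_spec (nseq j false ++ nseq i true).
rewrite Dleft_nseq_false Dleft_alltrue; last by rewrite count_nseq.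
by rewrite !count_cat !count_nseq size_nseq /= !mul0n !mul1n add0n addn0.
Qed.

Lemma kap_gxg a b i j : (j < p)%N -> (a < p)%N -> (b < p)%N -> (j <= b)%N ->
  kap a b (g ^+ i * x ^+ j * g) = (((i.+1 %% p)%N == a) && (j == b))%:R.
Proof.
move=> hj ha hb jb.
have -> : g ^+ i * x ^+ j * g =
    g ^+ i.+1 * x ^+ j + g ^+ i * (x ^+ j * g ^+ 1 - g ^+ 1 * x ^+ j).
  by rewrite expr1 mulrBr !mulrA -exprSr addrC subrK.
rewrite (klD (kap_lin _ _)) kap_gx // (@kap_SpX j) ?addr0 //.
exact/SpX_gm/xjgi.
Qed.

Lemma sum_delta_row (F : nat -> nat -> k) (Q : nat -> bool) a : (a < p)%N ->
  \sum_(i < p) \sum_(j < p) F i j * ((i == a :> nat) && Q j)%:R =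
  \sum_(j < p) F a j * (Q j)%:R.
Proof.
move=> ha; rewrite -(sum_delta (fun i => \sum_(j < p) F i j * (Q j)%:R) ha).
apply: eq_bigr => i _; case: eqP => [->|_]; first by [].
by rewrite big1 // => j _; rewrite andFb mulr0.
Qed.

Lemma RI_form L : L * g = L -> L * x = 0 -> forall a b, (a < p)%N -> (b < p)%N ->
  kap a b L = kap 0 p.-1 L * ((b == p.-1)%:R - (b == 0%N)%:R).
Proof.
move=> hg hx.
have pm1 : (p.-1 < p)%N by rewrite prednK ?p_gt0.
have p10 : (p.-1 == 0%N) = false by rewrite -(subn1 p) subn_eq0 leqNgt p_gt1.
have R1 a b : (a < p)%N -> (b < p)%N -> \sum_(j < p) kap a j L *
    ((j.+1 == b) || ((j.+1 == p) && (b == 1%N)))%:R = 0.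
  move=> ha hb; transitivity (kap a b (L * x)); last by rewrite hx (kl0 (kap_lin _ _)).
  rewrite [in RHS](kap_rec L) mulr_suml (kl_sum (kap_lin _ _)).
  have := sum_delta_row (fun i j => kap i j L)
    (fun j => ((j.+1 == b) || ((j.+1 == p) && (b == 1%N)))) ha; rewrite /= => <-.
  apply: eq_bigr => i _; rewrite mulr_suml (kl_sum (kap_lin _ _)).
  apply: eq_bigr => j _.
  rewrite -scalerAl (klZ (kap_lin _ _)) -mulrA -exprSr kap_gx_ext //.
  by rewrite modn_small.
have R2 a : (a.+1 < p)%N -> kap a.+1 p.-1 L = kap a p.-1 L.
  move=> ha; rewrite -{1}hg {1}(kap_rec L) mulr_suml (kl_sum (kap_lin _ _)).
  rewrite -(sum_delta2 (fun a b => kap a b L) (ltnW ha) pm1); apply: eq_bigr => i _.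
  rewrite mulr_suml (kl_sum (kap_lin _ _)); apply: eq_bigr => j _.
  rewrite -scalerAl (klZ (kap_lin _ _)) kap_gxg // ?modS_eq //.
  by rewrite -ltnS prednK ?p_gt0.
have R2' a : (a < p)%N -> kap a p.-1 L = kap 0 p.-1 L.
  elim: a => [//|a IH] ha; by rewrite R2 // IH // ltnW.
move=> a b ha hb.
case: b hb => [|b] hb.
  have := R1 a 1%N ha p_gt1.
  have eqpS (j : nat) : (j.+1 == p) = (j == p.-1) by rewrite -{1}(prednK p_gt0) eqSS.
  under eq_bigr => j _ do rewrite eqxx andbT eqSS eqpS.
  have split01 (j : nat) : ((j == 0%N) || (j == p.-1))%:R =
      (j == 0%N)%:R + (j == p.-1)%:R :> k.
    case: eqP => [->|_]; first by rewrite eq_sym p10 addr0.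
    by rewrite add0r.
  under eq_bigr => j _ do rewrite split01 mulrDr.
  rewrite big_split /= (sum_delta1 (fun j => kap a j L)) ?p_gt0 //.
  rewrite (sum_delta1 (fun j => kap a j L)) // R2' // => /eqP.
  by rewrite addr_eq0 => /eqP ->; rewrite eq_sym p10 sub0r mulrN1.
case: (ltnP b.+1 p.-1) => hb2.
  have := R1 a b.+2 ha; rewrite -(prednK p_gt0) ltnS => /(_ hb2).
  under eq_bigr => j _ do rewrite eqSS andbF orbF.
  rewrite prednK ?p_gt0 // (sum_delta1 (fun j => kap a j L)) // => ->.
  by rewrite (ltn_eqF hb2) /= subrr mulr0.
have bp : b.+1 = p.-1 by apply/eqP; rewrite eqn_leq hb2 andbT -ltnS prednK ?p_gt0.
by rewrite bp R2' // eqxx p10 subr0 mulr1.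
Qed.

Lemma kap_Lam' : kap 0 p.-1 Lam' = 1.
Proof.
have pm1 : (p.-1 < p)%N by rewrite prednK ?p_gt0.
have p10 : (p.-1 == 0%N) = false by rewrite -(subn1 p) subn_eq0 leqNgt p_gt1.
rewrite /Lam' /T mulr_suml (kl_sum (kap_lin _ _)).
rewrite (eq_big_nat _ _ (F2 := fun j => \sum_(i < p) ((i == 0%N :> nat) && (j == p.-1))%:R)).
  rewrite nat1_sum [X in _ - X]big1 ?subr0; last by move=> i _; rewrite (eq_sym 0%N) p10 andbF.
  transitivity (\sum_(a < p) \sum_(b < p) 1 * ((a == p.-1 :> nat) && (b == 0%N :> nat))%:R :> k);
    last exact: (sum_delta2 (fun _ _ => 1) pm1 p_gt0).
  apply: eq_bigr => j _; apply: eq_bigr => i _; by rewrite mul1r andbC.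
move=> j /andP [_ hj]; rewrite /S mulr_sumr (kl_sum (kap_lin _ _)).
apply: eq_bigr => i _.
have -> : x ^+ j * g ^+ i = g ^+ i * x ^+ j + (x ^+ j * g ^+ i - g ^+ i * x ^+ j).
  by rewrite addrC subrK.
rewrite (klD (kap_lin _ _)) kap_gx ?p_gt0 // (@kap_SpX j) ?addr0 ?p_gt0 //.
  by rewrite modn_small.
by rewrite -ltnS prednK ?p_gt0.
exact: xjgi.
Qed.

Lemma RI_uniq L : L * g = L -> L * x = 0 -> exists c, L = c *: Lam'.
Proof.
move=> hg hx; exists (kap 0 p.-1 L); apply: kap_ext => a b ha hb.
rewrite (klZ (kap_lin _ _)) (RI_form hg hx) // (RI_form Lam'g Lam'x) //.
by rewrite kap_Lam' mul1r.
Qed.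

Lemma nzk t : (0 < t)%N -> (t < p)%N -> (t%:R : k) != 0.
Proof. by move=> h1 h2; rewrite -(dvdn_pcharf chp) gtnNdvd. Qed.

Lemma kapg_lin i j q : klinear (fun a => kap i j (g ^+ q * a)).
Proof. by move=> c a b /=; rewrite mulrDr -scalerAr (kap_lin i j). Qed.

Lemma sum_count n t (F : n.-tuple bool -> k) K :
  (forall w : n.-tuple bool, F w = if count id w == t then K else 0) ->
  \sum_(w : n.-tuple bool) F w = ('C(n, t))%:R * K.
Proof.
move=> H; rewrite (eq_bigr (fun w : n.-tuple bool => (count id w == t)%:R * K)).
  by rewrite -mulr_suml -natr_sum count_tuples.
by move=> w _; rewrite H; case: eqP; rewrite ?mul1r ?mul0r.
Qed.

Lemma cnt_le n (w : n.-tuple bool) : (count id w <= n)%N.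
Proof. by rewrite -{2}(size_tuple w) count_size. Qed.

Lemma ltpm1 n : (n < p)%N -> (n <= p.-1)%N.
Proof. by move=> h; rewrite -ltnS prednK ?p_gt0. Qed.

Lemma kap_Dleft i j w : (count negb w <= j)%N -> (i < p)%N -> (j < p)%N ->
  kap i j (Dleft g x w) = kap i j (g ^+ (count id w) * x ^+ (count negb w)).
Proof.
move=> hw hi hj.
rewrite -[Dleft g x w](subrK (g ^+ (count id w) * x ^+ (count negb w))).
by rewrite (klD (kap_lin _ _)) (kap_SpX hw hi hj (Dleft_spec w)) add0r.
Qed.

Lemma DL_fwd lam c : klinear lam ->
  (forall i j : 'I_p, lam (g ^+ i * x ^+ j) =
     c * ((i == 1%N :> nat) && (j == p.-1 :> nat))%:R) ->
  dual_left_integral p g x lam.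
Proof.
move=> ll H f fl m n.
have Hv a b : (a < p)%N -> (b < p)%N ->
    lam (g ^+ a * x ^+ b) = c * ((a == 1%N) && (b == p.-1))%:R.
  by move=> ha hb; have := H (Ordinal ha) (Ordinal hb).
rewrite /conv_on_basis.
rewrite (sum_count (t := n) (K := f 1 * lam (g ^+ m * x ^+ n))); first by rewrite binn mul1r.
move=> w; rewrite Dright_count.
have cn := cnt_le w.
case: eqP => [cw|/eqP cw].
  rewrite cw Dleft_alltrue; last by rewrite count_negb size_tuple cw subnn.
  rewrite size_tuple Hv //.
  case: (boolP ((m == 1%N :> nat) && (n == p.-1 :> nat))) => [/andP [/eqP m1 /eqP np]|_].
    by rewrite -exprD m1 np add1n prednK ?p_gt0 // gp.
  by rewrite !mulr0.
rewrite Hv ?(leq_ltn_trans cn (ltn_ord n)) //.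
have -> : (count id w == p.-1) = false.
  apply/negbTE; rewrite neq_ltn; apply/orP; left.
  by apply: (leq_trans _ (ltpm1 (ltn_ord n))); rewrite ltn_neqAle cw cn.
by rewrite andbF !mulr0.
Qed.

Lemma DL_bwd lam : klinear lam -> dual_left_integral p g x lam ->
  exists c : k, forall i j : 'I_p,
    lam (g ^+ i * x ^+ j) = c * ((i == 1%N :> nat) && (j == p.-1 :> nat))%:R.
Proof.
move=> ll H.
have pm1 : (p.-1 < p)%N by rewrite prednK ?p_gt0.
have p10 : (p.-1 == 0%N) = false by rewrite -(subn1 p) subn_eq0 leqNgt p_gt1.
have Ha t : (t < p.-1)%N -> forall m, (m < p)%N -> lam (g ^+ m * x ^+ t) = 0.
  elim/ltn_ind: t => t IH ht m hm.
  have ht1 : (t.+1 < p)%N by rewrite -[p](prednK p_gt0) ltnS.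
  have htp : (t < p)%N by apply: ltnW.
  have := H _ (kapg_lin t 1%N (p - m)) (Ordinal hm) (Ordinal ht1).
  have f1 : kap t 1%N (g ^+ (p - m) * 1) = 0.
    by rewrite -(expr0 x) kap_gx ?p_gt1 ?p_gt0 // andbF.
  rewrite /conv_on_basis /= f1 mul0r.
  rewrite (sum_count (t := t) (K := lam (g ^+ m * x ^+ t))).
    rewrite binSn => /eqP; rewrite mulf_eq0 => /orP [|/eqP //].
    by rewrite (negbTE (nzk _ _)).
  move=> w; rewrite Dright_count.
  have cn := cnt_le w.
  rewrite mulrA -exprD subnK ?(ltnW hm) // gp mul1r.
  have DS := Dleft_spec w.
  have cneg : count negb w = (t.+1 - count id w)%N by rewrite count_negb size_tuple.
  case: (ltngtP (count id w) t) => [clt|cgt|ct].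
  - by rewrite (IH _ clt) ?(ltn_trans clt ht) // mulr0.
  - have ct1 : count id w = t.+1 by apply/eqP; rewrite eqn_leq cgt cn.
    rewrite kap_Dleft ?cneg ?ct1 ?subnn ?p_gt1 //.
    by rewrite kap_gx ?p_gt0 ?p_gt1 // andbF mul0r.
  - rewrite kap_Dleft ?cneg ?ct ?subSnn ?p_gt1 //.
    by rewrite kap_gx ?p_gt1 // modn_small // !eqxx mul1r.
have Hb m : (m < p)%N -> m != 1%N -> lam (g ^+ m * x ^+ p.-1) = 0.
  move=> hm m1.
  have := H _ (kap_lin 0%N 0%N) (Ordinal hm) (Ordinal pm1).
  have f1 : kap 0%N 0%N (1 : A) = 1.
    by rewrite -[1 : A]mulr1 -{1}(expr0 g) -(expr0 x) kap_gx ?p_gt0 // mod0n.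
  rewrite /conv_on_basis /= f1 mul1r.
  rewrite (sum_count (t := p.-1) (K := ((((m + p.-1) %% p)%N == 0%N))%:R *
      lam (g ^+ m * x ^+ p.-1))).
    rewrite binn mul1r => /eqP; rewrite -subr_eq0 -{2}[lam _]mul1r -mulrBl.
    rewrite mulf_eq0 => /orP [|/eqP //].
    case: m hm m1 => [|m] hm m1.
      by rewrite add0n modn_small // p10 /= sub0r oppr_eq0 oner_eq0.
    rewrite addSn -addnS prednK ?p_gt0 // modnDr modn_small ?(ltnW hm) //.
    by case: m hm m1 => [|m] // hm m1; rewrite /= sub0r oppr_eq0 oner_eq0.
  move=> w; rewrite Dright_count.
  have cn := cnt_le w.
  have cneg : count negb w = (p.-1 - count id w)%N by rewrite count_negb size_tuple.
  case: (ltngtP (count id w) p.-1) => [clt|cgt|ct].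
  - by rewrite (Ha _ clt) // mulr0.
  - by move: (leq_trans cgt cn); rewrite ltnn.
  - rewrite Dleft_alltrue ?cneg ?ct ?subnn // size_tuple -exprD.
    by rewrite -[g ^+ _]mulr1 -(expr0 x) kap_gx ?p_gt0 // eqxx andbT.
exists (lam (g ^+ 1 * x ^+ p.-1)) => i j.
case: (ltnP j p.-1) => hj.
  by rewrite Ha // (ltn_eqF hj) andbF mulr0.
have jp : nat_of_ord j = p.-1 by apply/eqP; rewrite eqn_leq hj ltpm1.
rewrite jp eqxx andbT; case: (eqVneq (nat_of_ord i) 1%N) => [->|i1].
  by rewrite mulr1.
by rewrite Hb // mulr0.
Qed.

Lemma DR_fwd lam c : klinear lam ->
  (forall i j : 'I_p, lam (g ^+ i * x ^+ j) =
     c * ((i == 0%N :> nat) && (j == p.-1 :> nat))%:R) ->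
  dual_right_integral p g x lam.
Proof.
move=> ll H f fl m n.
have Hv a b : (b < p)%N ->
    lam (g ^+ a * x ^+ b) = c * (((a %% p)%N == 0%N) && (b == p.-1))%:R.
  by move=> hb; rewrite -gmod; have := H (Ordinal (ltn_pmod a p_gt0)) (Ordinal hb).
have lk z : SpX p.-1 z -> lam z = 0.
  apply: SpX_kill => // i j hj; rewrite Hv ?(ltn_trans hj) ?prednK ?p_gt0 //.
  by rewrite (ltn_eqF hj) andbF mulr0.
rewrite /conv_on_basis.
rewrite (sum_count (t := 0%N) (K := lam (g ^+ m * x ^+ n) * f (g ^+ m))).
  rewrite bin0 mul1r; case: (eqVneq (nat_of_ord m) 0%N) => [->|m0].
    by rewrite expr0 mul1r mulrC.
  by rewrite Hv // modn_small // (negbTE m0) /= !mulr0 !mul0r.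
move=> w; rewrite Dright_count.
have cn := cnt_le w.
have cneg : count negb w = (n - count id w)%N by rewrite count_negb size_tuple.
case: eqP => [c0|/eqP c0].
  by rewrite c0 expr0 mulr1 Dleft_allfalse // size_tuple.
rewrite -[Dleft g x w](subrK (g ^+ (count id w) * x ^+ (count negb w))).
rewrite mulrDr (klD ll) lk; last first.
  apply: SpX_gm; apply: (SpX_mono _ (Dleft_spec w)).
  by rewrite cneg (leq_trans (leq_subr _ _)) // ltpm1.
rewrite add0r mulrA -exprD Hv; last first.
  by rewrite cneg (leq_ltn_trans (leq_subr _ _)).
have -> : (count negb w == p.-1) = false.
  apply/negbTE; rewrite neq_ltn; apply/orP; left; rewrite cneg.
  apply: (leq_trans _ (ltpm1 (ltn_ord n))).
  by rewrite -subn_gt0 subKn // lt0n.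
by rewrite andbF mulr0 mul0r.
Qed.

Lemma DR_bwd lam : klinear lam -> dual_right_integral p g x lam ->
  exists c : k, forall i j : 'I_p,
    lam (g ^+ i * x ^+ j) = c * ((i == 0%N :> nat) && (j == p.-1 :> nat))%:R.
Proof.
move=> ll H.
have pm1 : (p.-1 < p)%N by rewrite prednK ?p_gt0.
have p10 : (p.-1 == 0%N) = false by rewrite -(subn1 p) subn_eq0 leqNgt p_gt1.
have Ha m n : (m < p)%N -> (n < p)%N -> m != 0%N -> lam (g ^+ m * x ^+ n) = 0.
  move=> hm hn m0.
  have := H _ (kap_lin m 0%N) (Ordinal hm) (Ordinal hn).
  have f1 : kap m 0%N (1 : A) = 0.
    by rewrite -[1 : A]mulr1 -{1}(expr0 g) -(expr0 x) kap_gx ?p_gt0 // mod0n eq_sym (negbTE m0).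
  rewrite /conv_on_basis /= f1 mul0r.
  rewrite (sum_count (t := 0%N) (K := lam (g ^+ m * x ^+ n))).
    by rewrite bin0 mul1r.
  move=> w; rewrite Dright_count.
  have cn := cnt_le w.
  case: eqP => [c0|/eqP c0].
    rewrite c0 Dleft_allfalse // size_tuple kap_gx ?p_gt0 //.
    by rewrite modn_small // !eqxx mulr1.
  rewrite kap_gx ?p_gt0 ?(leq_ltn_trans cn) //.
  by rewrite (negbTE c0) andbF mulr0.
have Hb t : (t < p.-1)%N -> lam (g ^+ 0 * x ^+ t) = 0.
  elim/ltn_ind: t => t IH ht.
  have ht1 : (t.+1 < p)%N by rewrite -[p](prednK p_gt0) ltnS.
  have htp : (t < p)%N by apply: ltnW.
  have := H _ (kap_lin p.-1 1%N) (Ordinal pm1) (Ordinal ht1).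
  have f1 : kap p.-1 1%N (1 : A) = 0.
    by rewrite -[1 : A]mulr1 -{1}(expr0 g) -(expr0 x) kap_gx ?p_gt0 ?p_gt1 // andbF.
  rewrite /conv_on_basis /= f1 mul0r.
  rewrite (sum_count (t := 1%N) (K := lam (g ^+ 0 * x ^+ t))).
    rewrite bin1 => /eqP; rewrite mulf_eq0 => /orP [|/eqP //].
    by rewrite (negbTE (nzk _ _)).
  move=> w; rewrite Dright_count.
  have cn := cnt_le w.
  have cneg : count negb w = (t.+1 - count id w)%N by rewrite count_negb size_tuple.
  case: eqP => [c1|/eqP c1]; last first.
    rewrite kap_gx ?p_gt0 ?p_gt1 ?(leq_ltn_trans cn) //.
    by rewrite (negbTE c1) andbF mulr0.
  rewrite c1 kap_gx ?p_gt0 ?p_gt1 // modn_small // !eqxx mulr1.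
  have lk z : SpX t z -> lam z = 0.
    apply: SpX_kill => // i j hj; rewrite -gmod.
    case: (eqVneq (i %% p)%N 0%N) => [->|i0]; first by apply: IH => //; apply: ltn_trans ht.
    by apply: Ha => //; [exact: ltn_pmod p_gt0 | exact: ltn_trans hj htp].
  rewrite -[Dleft g x w](subrK (g ^+ (count id w) * x ^+ (count negb w))).
  rewrite mulrDr (klD ll) lk; last first.
    by apply: SpX_gm; have := Dleft_spec w; rewrite cneg c1 subn1.
  by rewrite add0r mulrA -exprD cneg c1 subn1 /= addn1 prednK ?p_gt0 // gp expr0.
exists (lam (g ^+ 0 * x ^+ p.-1)) => i j.
case: (eqVneq (nat_of_ord i) 0%N) => [i0|i0]; last first.
  by rewrite Ha // mulr0.
rewrite i0 andTb.
case: (ltnP j p.-1) => hj.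
  by rewrite Hb // (ltn_eqF hj) mulr0.
have jp : nat_of_ord j = p.-1 by apply/eqP; rewrite eqn_leq hj ltpm1.
by rewrite jp eqxx mulr1.
Qed.

Variable eps : A -> k.
Hypothesis ceps : is_counit g x eps.

Lemma eps_lin : klinear eps. Proof. by case: ceps. Qed.
Lemma eps_mul a b : eps (a * b) = eps a * eps b. Proof. by case: ceps. Qed.
Lemma eps_exp a n : eps (a ^+ n) = eps a ^+ n.
Proof.
elim: n => [|n IH]; first by rewrite !expr0; case: ceps.
by rewrite !exprS eps_mul IH.
Qed.
Lemma eps_gx i j : eps (g ^+ i * x ^+ j) = (j == 0%N)%:R.
Proof.
rewrite eps_mul !eps_exp; case: ceps => _ _ _ -> ->.
by rewrite expr1n mul1r expr0n.
Qed.

Lemma LI L : g * L = L -> x * L = 0 -> left_integral eps L.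
Proof.
move=> hg hx h.
have xjL j : x ^+ j * L = (j == 0%N)%:R *: L.
  case: j => [|j]; first by rewrite expr0 mul1r scale1r.
  by rewrite exprSr -mulrA hx mulr0 scale0r.
have giL i : g ^+ i * L = L.
  by elim: i => [|i IH]; rewrite ?expr0 ?mul1r // exprSr -mulrA hg IH.
rewrite [in LHS](kap_rec h) [in RHS](kap_rec h) mulr_suml.
rewrite (kl_sum eps_lin) scaler_suml; apply: eq_bigr => i _.
rewrite mulr_suml (kl_sum eps_lin) scaler_suml; apply: eq_bigr => j _.
by rewrite -scalerAl -mulrA xjL -scalerAr giL (klZ eps_lin) eps_gx scalerA.
Qed.

Lemma RI L : L * g = L -> L * x = 0 -> right_integral eps L.
Proof.
move=> hg hx h.
have xjL j : L * x ^+ j = (j == 0%N)%:R *: L.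
  case: j => [|j]; first by rewrite expr0 mulr1 scale1r.
  by rewrite exprS mulrA hx mul0r scale0r.
have giL i : L * g ^+ i = L.
  by elim: i => [|i IH]; rewrite ?expr0 ?mulr1 // exprS mulrA hg IH.
rewrite [in LHS](kap_rec h) [in RHS](kap_rec h) mulr_sumr.
rewrite (kl_sum eps_lin) scaler_suml; apply: eq_bigr => i _.
rewrite mulr_sumr (kl_sum eps_lin) scaler_suml; apply: eq_bigr => j _.
by rewrite -scalerAr mulrA giL xjL (klZ eps_lin) eps_gx scalerA.
Qed.

Lemma LI_inv L : left_integral eps L -> g * L = L /\ x * L = 0.
Proof. by move=> h; rewrite !h; case: ceps => _ _ _ -> ->; rewrite scale1r scale0r. Qed.
Lemma RI_inv L : right_integral eps L -> L * g = L /\ L * x = 0.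
Proof. by move=> h; rewrite !h; case: ceps => _ _ _ -> ->; rewrite scale1r scale0r. Qed.

End Rad.

Theorem lemma3p2 (k : closedFieldType) (p : nat) (A : algType k)
    (g x : A) (eps : A -> k) :
  prime p -> p \in [pchar k] ->
  radford_rels p g x -> radford_basis p g x -> is_counit g x eps ->
  [/\ forall L : A, left_integral eps L <->
        exists c : k, L = c *: ((\sum_(i < p) g ^+ i) *
                                (\sum_(1 <= i < p) (-1) ^+ i *: x ^+ i)),
      forall L : A, right_integral eps L <->
        exists c : k, L = c *: ((\sum_(1 <= i < p) x ^+ i) *
                                (\sum_(i < p) g ^+ i)),
      forall lam : A -> k, klinear lam ->
        (dual_left_integral p g x lam <->
         exists c : k, forall i j : 'I_p,
           lam (g ^+ i * x ^+ j) = c * ((i == 1%N :> nat) && (j == p.-1 :> nat))%:R)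
    & forall lam : A -> k, klinear lam ->
        (dual_right_integral p g x lam <->
         exists c : k, forall i j : 'I_p,
           lam (g ^+ i * x ^+ j) = c * ((i == 0%N :> nat) && (j == p.-1 :> nat))%:R)].
Proof.
move=> pp chp rels bas ceps; split.
- move=> L; split.
    move=> h; have [hg hx] := LI_inv ceps h.
    exact: (LI_uniq pp chp rels bas hg hx).
  move=> [c ->]; apply: (LI pp bas ceps).
    by rewrite -scalerAr (gLam pp rels).
  by rewrite -scalerAr (xLam pp chp rels) scaler0.
- move=> L; split.
    move=> h; have [hg hx] := RI_inv ceps h.
    exact: (RI_uniq pp chp rels bas hg hx).
  move=> [c ->]; apply: (RI pp bas ceps).
    by rewrite -scalerAl (Lam'g pp rels).
  by rewrite -scalerAl (Lam'x pp chp rels) scaler0.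
- move=> lam ll; split; first exact: (DL_bwd pp chp rels bas ll).
  by move=> [c H]; apply: (DL_fwd pp rels ll H).
- move=> lam ll; split; first exact: (DR_bwd pp chp rels bas ll).
  by move=> [c H]; apply: (DR_fwd pp rels ll H).
Qed.
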